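(* Let $\theta\in\Theta=\{i\pi/4\}_{0\le i\le 7}$, let $d,r\in\{0,1\}$ and set $\delta=\theta+r\pi$. Let $\rho_{\mathrm{dummy}}$ and $\rho_{\mathrm{trap}}$ be single-qubit density matrices with $F_{\mathrm{dummy}}=\langle d|\rho_{\mathrm{dummy}}|d\rangle$ and $F_{\mathrm{trap}}=\langle +_\theta|\rho_{\mathrm{trap}}|+_\theta\rangle$. Apply a controlled-$Z$ gate to the two-qubit state $\rho_{\mathrm{dummy}}\otimes\rho_{\mathrm{trap}}$ and then measure the trap (second) qubit in the basis $\{|+_\delta\rangle,|-_\delta\rangle\}$, where outcome $0$ corresponds to $|+_\delta\rangle$ and outcome $1$ to $|-_\delta\rangle$. Then the probability that the outcome differs from $d\oplus r$ is $$p_{\mathrm{fail}}=F_{\mathrm{dummy}}(1-F_{\mathrm{trap}})+F_{\mathrm{trap}}(1-F_{\mathrm{dummy}}).$$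
   Context: For $\theta\in\mathbb{R}$, $|\pm_\theta\rangle=\frac{1}{\sqrt2}(|0\rangle\pm e^{i\theta}|1\rangle)$. This models a test round of two-qubit verified blind quantum computation: the ''dummy'' qubit is intended to be $|d\rangle$ and the ''trap'' qubit is intended to be $|+_\theta\rangle$; the test round fails when the trap measurement outcome is not $d\oplus r$. *)

(* Defs.v *)
From HB Require Import structures.
From mathcomp Require Import all_boot all_order all_algebra.
From mathcomp Require Import complex.
From mathcomp Require Import reals trigo.
Set Implicit Arguments. Unset Strict Implicit. Unset Printing Implicit Defensive.
Import Order.TTheory GRing.Theory Num.Theory.
Local Open Scope ring_scope.
Local Open Scope complex_scope.

Section Qubits.
Variable R : realType.
Local Notation C := R[i].

Definition expi (t : R) : C := (cos t) +i* (sin t).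

Definition adj m n (M : 'M[C]_(m, n)) : 'M[C]_(n, m) := (map_mx conjc M)^T.

Definition ket (b : bool) : 'cV[C]_2 :=
  \col_(i < 2) (if (i : nat) == b then 1 else 0).

(* |+_t> (s = false) and |-_t> (s = true):  (|0> +/- e^{it}|1>)/sqrt 2 *)
Definition ket_pm (t : R) (s : bool) : 'cV[C]_2 :=
  \col_(i < 2) (((Num.sqrt (2 : R))^-1)%:C *
                (if (i : nat) == 0%N then 1 else (if s then -1 else 1) * expi t)).

Definition density_matrix (rho : 'M[C]_2) : Prop :=
  adj rho = rho /\
  (forall v : 'cV[C]_2, 0 <= (adj v *m rho *m v) 0 0) /\
  \tr rho = 1.

Definition expect (v : 'cV[C]_2) (rho : 'M[C]_2) : C := (adj v *m rho *m v) 0 0.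

(* Kronecker product, basis |a b> <-> index 2a + b *)
Definition kron2 (A B : 'M[C]_2) : 'M[C]_4 :=
  \matrix_(i < 4, j < 4)
    (A (inord (i %/ 2)) (inord (j %/ 2)) * B (inord (i %% 2)) (inord (j %% 2))).

Definition CZ : 'M[C]_4 := diag_mx (\row_(i < 4) (if (i : nat) == 3%N then -1 else 1)).

Definition proj_trap (t : R) (s : bool) : 'M[C]_4 :=
  kron2 1%:M (ket_pm t s *m adj (ket_pm t s)).

(* probability of outcome s (false = 0 = |+_t>, true = 1 = |-_t>) on state sigma *)
Definition prob_trap (t : R) (s : bool) (sigma : 'M[C]_4) : C :=
  \tr (proj_trap t s *m sigma).

End Qubits.

Arguments ket {R}.
Arguments ket_pm {R}.
Arguments expect {R}.
Arguments CZ {R}.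
Arguments kron2 {R}.
Arguments adj {R m n}.
Arguments prob_trap {R}.
Arguments density_matrix {R}.
Arguments expi {R}.
Arguments proj_trap {R}.

(* Main.v *)
Require Import Defs.
From HB Require Import structures.
From mathcomp Require Import all_boot all_order all_algebra.
From mathcomp Require Import complex.
From mathcomp Require Import reals trigo.
From mathcomp Require Import ring.
Import Order.TTheory GRing.Theory Num.Theory.
Local Open Scope ring_scope.
Local Open Scope complex_scope.

Section S.
Variable R : realType.
Local Notation C := R[i].

Lemma expiDpi (t : R) : expi (t + pi) = - expi t.
Proof. by rewrite /expi cosDpi sinDpi; apply/eqP; rewrite eq_complex /= !eqxx. Qed.

Lemma expi_conj (t : R) : expi t * (expi t)^* = 1.
Proof.
rewrite /expi /= ; apply/eqP; rewrite eq_complex /=.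
rewrite -(cos2Dsin2 t) !expr2; apply/andP; split; apply/eqP; ring.
Qed.

Lemma sqrt2_inv : (((Num.sqrt (2:R))^-1)%:C * ((Num.sqrt (2:R))^-1)%:C : C) = (2%:R^-1)%:C.
Proof.
rewrite -rmorphM /= -invfM -expr2 sqr_sqrtr //.
Qed.

Lemma proj_closed (t : R) (s : bool) :
  ket_pm t s *m adj (ket_pm t s) =
  \matrix_(i < 2, j < 2) ((2%:R^-1)%:C *
     (if (i:nat) == 0%N then (if (j:nat) == 0%N then 1 else (if s then -1 else 1) * (expi t)^*)
      else (if (j:nat) == 0%N then (if s then -1 else 1) * expi t else 1))).
Proof.
apply/matrixP => i j; rewrite !mxE big_ord1 !mxE.
have cc : ((Num.sqrt (2:R))^-1) -i* 0 = ((Num.sqrt (2:R))^-1)%:C :> C.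
  by apply/eqP; rewrite eq_complex /= oppr0 !eqxx.
rewrite rmorphM /= cc mulrACA sqrt2_inv.
have e := expi_conj t.
have c1 : (1 -i* 0 : C) = 1 by apply/eqP; rewrite eq_complex /= oppr0 !eqxx.
case: i => [[|[|//]] ?]; case: j => [[|[|//]] ?] /=;
  case: s; rewrite ?rmorphM ?rmorphN ?rmorph1 ?c1 ?mulr1 ?mul1r. all: try ring.
all: transitivity ((2^-1)%:C * (expi t * (expi t)^*)); [ring | by rewrite e mulr1].
Qed.
Lemma expect_tr (v : 'cV[C]_2) (rho : 'M[C]_2) :
  expect v rho = \tr (v *m adj v *m rho).
Proof.
have -> : \tr (v *m adj v *m rho) = \tr ((adj v *m rho) *m v) by rewrite -mulmxA mxtrace_mulC.
by rewrite /expect /mxtrace big_ord1.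
Qed.

Lemma ket_pm_pi (t : R) s : ket_pm (t + pi) s = ket_pm t (~~ s).
Proof.
apply/matrixP => i j; rewrite !mxE expiDpi.
by case: s; rewrite /= ?mulN1r ?mul1r ?opprK.
Qed.

Lemma tr2 (M : 'M[C]_2) : \tr M = M ord0 ord0 + M (lift ord0 ord0) (lift ord0 ord0).
Proof. by rewrite /mxtrace big_ord_recl big_ord1. Qed.

Lemma inord_eq2 a b : (a < 2)%N -> (b < 2)%N -> ((inord a : 'I_2) == inord b) = (a == b).
Proof. by move=> ha hb; rewrite -val_eqE /= !inordK. Qed.

Lemma adjCZ : adj (CZ : 'M[C]_4) = CZ.
Proof.
apply/matrixP => i j; rewrite !mxE.
case: (i =P j) => [->|/eqP ne]; last by rewrite (eq_sym j i) (negbTE ne) !mulr0n rmorph0.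
by rewrite eqxx !mulr1n; case: ((j:nat) == 3%N); rewrite ?rmorphN rmorph1.
Qed.

Lemma CZ_conj (M : 'M[C]_4) : CZ *m M *m adj CZ =
  \matrix_(i,j) ((if (i:nat)==3%N then -1 else 1) * (if (j:nat)==3%N then -1 else 1) * M i j).
Proof.
rewrite adjCZ /CZ mul_diag_mx mul_mx_diag; apply/matrixP => i j; rewrite !mxE.
by rewrite mulrAC.
Qed.
End S.

Theorem lemma2 (R : realType) (k : 'I_8) (d r : bool)
    (rho_dummy rho_trap : 'M[R[i]]_2) :
  density_matrix rho_dummy -> density_matrix rho_trap ->
  let theta : R := (k%:R * pi) / 4%:R in
  let delta : R := theta + (r : nat)%:R * pi in
  let F_dummy := expect (ket d) rho_dummy in
  let F_trap := expect (ket_pm theta false) rho_trap in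
  let sigma := CZ *m kron2 rho_dummy rho_trap *m adj CZ in
  prob_trap delta (~~ (d (+) r)) sigma =
    F_dummy * (1 - F_trap) + F_trap * (1 - F_dummy).
Proof.
move=> [_ [_ trD]] [_ [_ trT]] theta delta FD FT sigma.
have Ed : ket_pm delta (~~ (d (+) r)) = ket_pm theta (~~ d).
  rewrite /delta; move: (r) => b.
  case: b; rewrite /= ?mul1r ?mul0r ?addr0 ?ket_pm_pi //.
  1,2: by case: (d).
rewrite /FD /FT /sigma /prob_trap /proj_trap Ed !expect_tr !proj_closed CZ_conj.
have kd : ket d *m adj (ket d) = \matrix_(i < 2, j < 2) (if ((i:nat) == d) && ((j:nat) == d) then 1 else 0 : R[i]).
  apply/matrixP => i j; rewrite !mxE big_ord1 !mxE.
  by case: ((i:nat) == d); case: ((j:nat) == d); rewrite ?rmorph1 ?rmorph0 ?mulr1 ?mulr0 ?mul0r.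
rewrite kd.
have [gD hD] : exists g : nat -> nat -> R[i], forall i j, rho_dummy i j = g i j.
  by exists (fun a b => rho_dummy (inord a) (inord b)) => i j; rewrite !inord_val.
have [gT hT] : exists g : nat -> nat -> R[i], forall i j, rho_trap i j = g i j.
  by exists (fun a b => rho_trap (inord a) (inord b)) => i j; rewrite !inord_val.
move: trD trT; rewrite !tr2 !hD !hT /= => trD trT.
rewrite /kron2 /mxtrace.
do 6 rewrite ?mxE ?big_ord_recr ?big_ord0 /=.
rewrite !hD !hT /divn /modn /bump /=.
rewrite ?inord_eq2 //=.
set E := expi theta.
rewrite ?inordK //=.
have e1 : gD 1%N 1%N = 1 - gD 0%N 0%N by rewrite -trD; ring.
have e2 : gT 1%N 1%N = 1 - gT 0%N 0%N by rewrite -trT; ring.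
rewrite e1 e2.
case: (d); rewrite /bump /= ?addn0. all: by field.
Qed.
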